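(* Let $\vdash$ be the logic determined by a finite set $\mathsf{M}$ of finite matrices. Then $\vdash$ is truth-equational if and only if there is a set of equations $\tau(x)$ such that for every $\langle\mathbf{B},G\rangle\in\mathrm{Mod}^{*}(\vdash)$ with $\mathbf{B}$ one-generated, and every $\langle\mathbf{A},F\rangle\in\mathsf{M}$, $G=\{b\in B:\mathbf{B}\vDash\tau(b)\}$ and $F\subseteq\{a\in A:\mathbf{A}/\Omega^{\mathbf{A}}F\vDash\tau(a/\Omega^{\mathbf{A}}F)\}$. In this case, one can take $\tau(x)$ to be the set of all equations $\epsilon(x)\approx\delta(x)$ such that $\epsilon^{\mathbf{A}/\Omega^{\mathbf{A}}F}(a/\Omega^{\mathbf{A}}F)=\delta^{\mathbf{A}/\Omega^{\mathbf{A}}F}(a/\Omega^{\mathbf{A}}F)$ for all $a\in F$ and all $\langle\mathbf{A},F\rangle\in\mathsf{M}$.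
   Context: A (logical) matrix is a pair $\langle \mathbf{A}, F\rangle$ with $\mathbf{A}$ an algebra and $F\subseteq A$. The Leibniz congruence $\Omega^{\mathbf{A}}F$ is the largest congruence of $\mathbf{A}$ for which $F$ is a union of blocks; the matrix is reduced if it is the identity. A logic is a substitution-invariant closure relation on formulas of a fixed algebraic language; a class $\mathsf{M}$ of matrices determines $\vdash_{\mathsf{M}}$: $\Gamma\vdash_{\mathsf{M}}\varphi$ iff for every $\langle\mathbf{A},F\rangle\in\mathsf{M}$ and every evaluation $f$ into $\mathbf{A}$, $f[\Gamma]\subseteq F$ implies $f(\varphi)\in F$. A model of $\vdash$ is a matrix $\langle\mathbf{B},G\rangle$ with $\vdash\subseteq\vdash_{\langle\mathbf{B},G\rangle}$; $\mathrm{Mod}^{*}(\vdash)$ is the class of reduced models. $\mathbf{B}\vDash\tau(b)$ means $\epsilon^{\mathbf{B}}(b)=\delta^{\mathbf{B}}(b)$ for every equation $\epsilon\approx\delta$ in $\tau$. $\vdash$ is truth-equational if there is a set of equations $\tau(x)$ such that $G=\{b\in B:\mathbf{B}\vDash\tau(b)\}$ for every $\langle\mathbf{B},G\rangle\in\mathrm{Mod}^{*}(\vdash)$. *)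

(* Defs.v *)
From Stdlib Require Import List ClassicalEpsilon.
From Stdlib Require Fin.
Set Implicit Arguments.

Record signature := { Op : Type ; ar : Op -> nat }.

Section AAL.
Context (S : signature).

(** Terms over a type of variables [V].  Formulas of the logic are [term nat]
    (countably many variables); one-variable terms are [term unit]. *)
Inductive term (V : Type) : Type :=
| Var : V -> term V
| App : forall f : Op S, (Fin.t (ar S f) -> term V) -> term V.

Record algebra := { car :> Type ; op : forall f : Op S, (Fin.t (ar S f) -> car) -> car }.

Fixpoint eval (A : algebra) (V : Type) (v : V -> A) (t : term V) : A :=
  match t with
  | Var x => v x
  | App f ts => op A f (fun i => eval A v (ts i))
  end.

Definition finite_algebra (A : algebra) : Prop := exists l : list A, forall a : A, In a l.

Definition one_generated (B : algebra) : Prop :=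
  exists b : B, forall c : B, exists t : term unit, eval B (fun _ => b) t = c.

Record matrix := { malg : algebra ; mfil : malg -> Prop }.

Definition congruence (A : algebra) (th : A -> A -> Prop) : Prop :=
  (forall a, th a a) /\ (forall a b, th a b -> th b a) /\
  (forall a b c, th a b -> th b c -> th a c) /\
  (forall f (xs ys : Fin.t (ar S f) -> A),
      (forall i, th (xs i) (ys i)) -> th (op A f xs) (op A f ys)).

Definition compatible (A : algebra) (th : A -> A -> Prop) (F : A -> Prop) : Prop :=
  forall a b, th a b -> F a -> F b.

(** The Leibniz congruence of [F]: the largest congruence compatible with [F],
    presented as the union of all such congruences (which is that largest one). *)
Definition Leibniz (A : algebra) (F : A -> Prop) (a b : A) : Prop :=
  exists th, congruence A th /\ compatible A th F /\ th a b.

Definition reduced (A : algebra) (F : A -> Prop) : Prop :=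
  forall a b, Leibniz A F a b -> a = b.

(** Quotient algebra A/th: carrier = the th-classes, operations computed on
    (chosen) representatives. It is the usual quotient when th is a congruence. *)
Section Quotient.
Context (A : algebra) (th : A -> A -> Prop).
Definition qcar : Type := { P : A -> Prop | exists a, P = th a }.
Definition qclass (a : A) : qcar := exist _ (th a) (ex_intro _ a eq_refl).
Definition qrep (c : qcar) : A :=
  proj1_sig (constructive_indefinite_description _ (proj2_sig c)).
Definition qop (f : Op S) (args : Fin.t (ar S f) -> qcar) : qcar :=
  qclass (op A f (fun i => qrep (args i))).
Definition quotient : algebra := {| car := qcar ; op := qop |}.
End Quotient.

Definition equation := (term unit * term unit)%type.
Definition sat (B : algebra) (tau : equation -> Prop) (b : B) : Prop :=
  forall e, tau e -> eval B (fun _ => b) (fst e) = eval B (fun _ => b) (snd e).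

Definition crel := (term nat -> Prop) -> term nat -> Prop.

Definition matrix_cons (m : matrix) : crel := fun Gamma phi =>
  forall v : nat -> malg m,
    (forall g, Gamma g -> mfil m (eval (malg m) v g)) -> mfil m (eval (malg m) v phi).

Definition logic_of (M : list matrix) : crel := fun Gamma phi =>
  forall m, In m M -> matrix_cons m Gamma phi.

Definition is_model (L : crel) (B : algebra) (G : B -> Prop) : Prop :=
  forall Gamma phi, L Gamma phi -> matrix_cons {| malg := B ; mfil := G |} Gamma phi.

Definition reduced_model (L : crel) (B : algebra) (G : B -> Prop) : Prop :=
  is_model L B G /\ reduced B G.

Definition truth_equational_by (L : crel) (tau : equation -> Prop) : Prop :=
  forall (B : algebra) (G : B -> Prop), reduced_model L B G ->
    forall b : B, G b <-> sat B tau b.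

Definition truth_equational (L : crel) : Prop :=
  exists tau, truth_equational_by L tau.

Definition lemma_condition (M : list matrix) (tau : equation -> Prop) : Prop :=
  (forall (B : algebra) (G : B -> Prop), reduced_model (logic_of M) B G ->
      one_generated B -> forall b : B, G b <-> sat B tau b) /\
  (forall m, In m M -> forall a : malg m, mfil m a ->
      sat (quotient (malg m) (Leibniz (malg m) (mfil m)))
          tau (@qclass (malg m) (Leibniz (malg m) (mfil m)) a)).

Definition tau_M (M : list matrix) : equation -> Prop := fun e =>
  forall m, In m M -> forall a : malg m, mfil m a ->
    let Q := quotient (malg m) (Leibniz (malg m) (mfil m)) in
    let q := @qclass (malg m) (Leibniz (malg m) (mfil m)) a in
    eval Q (fun _ => q) (fst e) = eval Q (fun _ => q) (snd e).

End AAL.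

(* Main.v *)
Require Import Defs.
From Stdlib Require Import List Arith Lia.
From Stdlib Require Import ProofIrrelevance FunctionalExtensionality PropExtensionality ClassicalEpsilon.

Section Proof.
Context (S : signature).

Fixpoint subst {V W : Type} (sg : V -> term S W) (t : term S V) : term S W :=
  match t with
  | Var _ x => sg x
  | App f ts => App f (fun i => subst sg (ts i))
  end.

Lemma eval_subst (A : algebra S) V W (sg : V -> term S W) (v : W -> A) t :
  eval A v (subst sg t) = eval A (fun x => eval A v (sg x)) t.
Proof.
  induction t as [x|f ts IH]; simpl; auto.
  f_equal. apply functional_extensionality; intro i; apply IH.
Qed.

Lemma eval_ext (A : algebra S) V (v w : V -> A) t :
  (forall x, v x = w x) -> eval A v t = eval A w t.
Proof. intro H. replace v with w; auto. symmetry; apply functional_extensionality; auto. Qed.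

Definition upd {A : Type} (v : nat -> A) (k : nat) (s : A) : nat -> A :=
  fun n => if Nat.eqb n k then s else v n.

Definition theta (A : algebra S) (F : A -> Prop) (s t : A) : Prop :=
  forall (phi : term S nat) (v : nat -> A) (k : nat),
    F (eval A (upd v k s) phi) <-> F (eval A (upd v k t) phi).

Section Th.
Context (A : algebra S) (F : A -> Prop).

Lemma theta_refl a : theta A F a a.
Proof. intros phi v k; tauto. Qed.
Lemma theta_sym a b : theta A F a b -> theta A F b a.
Proof. intros H phi v k; specialize (H phi v k); tauto. Qed.
Lemma theta_trans a b c : theta A F a b -> theta A F b c -> theta A F a c.
Proof. intros H1 H2 phi v k; specialize (H1 phi v k); specialize (H2 phi v k); tauto. Qed.

Lemma theta_MV N : forall v w : nat -> A, (forall m, theta A F (v m) (w m)) ->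
  (forall m, N <= m -> v m = w m) -> forall phi, F (eval A v phi) <-> F (eval A w phi).
Proof.
  induction N as [|N IH]; intros v w Hth Heq phi.
  - replace w with v; [tauto|]. apply functional_extensionality; intro m; apply Heq; lia.
  - assert (H1 : F (eval A v phi) <-> F (eval A (upd v N (w N)) phi)).
    { specialize (Hth N phi v N).
      replace (upd v N (v N)) with v in Hth; [exact Hth|].
      apply functional_extensionality; intro m; unfold upd.
      destruct (Nat.eqb_spec m N); subst; auto. }
    rewrite H1. apply IH.
    + intro m; unfold upd. destruct (Nat.eqb_spec m N); [subst; apply theta_refl|apply Hth].
    + intros m Hm; unfold upd. destruct (Nat.eqb_spec m N); auto.
      apply Heq; lia.
Qed.

Definition extv (n : nat) (zs : Fin.t n -> A) (v : nat -> A) (K : nat) : nat -> A :=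
  fun m => match lt_dec m n with
           | left h => zs (Fin.of_nat_lt h)
           | right _ => v (m - n)
           end.

Lemma theta_op f (xs ys : Fin.t (ar S f) -> A) :
  (forall i, theta A F (xs i) (ys i)) -> theta A F (op A f xs) (op A f ys).
Proof.
  intros H phi v k.
  set (n := ar S f).
  set (sg := fun m => if Nat.eqb m k
                      then App f (fun i => Var S (proj1_sig (Fin.to_nat i)))
                      else Var S (m + n)).
  assert (E : forall zs, eval A (extv n zs v 0) (subst sg phi) = eval A (upd v k (op A f zs)) phi).
  { intro zs. rewrite eval_subst. apply eval_ext. intro m. unfold sg, upd.
    destruct (Nat.eqb m k).
    - simpl. f_equal. apply functional_extensionality; intro i.
      unfold extv. destruct (Fin.to_nat i) as [j hj] eqn:Ei; simpl.
      destruct (lt_dec j n) as [h|h]; [|exfalso; lia].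
      rewrite <- (Fin.of_nat_to_nat_inv i). rewrite Ei. simpl. f_equal. apply Fin.of_nat_ext.
    - simpl. unfold extv. destruct (lt_dec (m + n) n); [lia|]. f_equal; lia. }
  rewrite <- !E. apply theta_MV with (N := n).
  - intro m; unfold extv. destruct (lt_dec m n); [apply H|apply theta_refl].
  - intros m Hm; unfold extv. destruct (lt_dec m n); [lia|auto].
Qed.

Lemma theta_congruence : congruence A (theta A F).
Proof.
  split; [exact theta_refl|split; [exact theta_sym|split; [exact theta_trans|exact theta_op]]].
Qed.

Lemma theta_compatible : compatible A (theta A F) F.
Proof.
  intros a b H Fa. specialize (H (Var S 0) (fun _ => a) 0). simpl in H. unfold upd in H. simpl in H.
  tauto.
Qed.

Lemma cong_eval th (Hc : congruence A th) s t (H : th s t) phi v k :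
  th (eval A (upd v k s) phi) (eval A (upd v k t) phi).
Proof.
  destruct Hc as (Hr & Hs & Ht & Ho).
  induction phi as [x|f ts IH]; simpl.
  - unfold upd; destruct (Nat.eqb x k); auto.
  - apply Ho; auto.
Qed.

Lemma Leibniz_theta a b : Leibniz A F a b <-> theta A F a b.
Proof.
  split.
  - intros (th & Hc & Hcomp & H) phi v k.
    pose proof (cong_eval th Hc a b H phi v k) as H1.
    destruct Hc as (Hr & Hs & _).
    split; intro; eapply Hcomp; eauto.
  - intro H. exists (theta A F). split; [apply theta_congruence|split; [apply theta_compatible|auto]].
Qed.

Lemma Leibniz_congruence : congruence A (Leibniz A F).
Proof.
  destruct theta_congruence as (Hr & Hs & Ht & Ho).
  split; [|split; [|split]].
  - intro; apply Leibniz_theta; auto.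
  - intros a b; rewrite !Leibniz_theta; auto.
  - intros a b c; rewrite !Leibniz_theta; eauto.
  - intros f xs ys H. apply Leibniz_theta, Ho. intro i; apply Leibniz_theta; auto.
Qed.

Lemma Leibniz_compatible : compatible A (Leibniz A F) F.
Proof. intros a b H. apply Leibniz_theta in H. apply theta_compatible; auto. Qed.

End Th.

Section Quot.
Context (A : algebra S) (th : A -> A -> Prop) (Hc : congruence A th).

Lemma qcar_eq (x y : qcar A th) : proj1_sig x = proj1_sig y -> x = y.
Proof. destruct x, y; simpl; intro; subst; f_equal; apply proof_irrelevance. Qed.

Lemma qclass_eq a b : qclass A th a = qclass A th b <-> th a b.
Proof.
  destruct Hc as (Hr & Hs & Ht & _).
  split.
  - intro E. apply (f_equal (@proj1_sig _ _)) in E. simpl in E.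
    rewrite E. apply Hr.
  - intro H. apply qcar_eq; simpl. apply functional_extensionality; intro x.
    apply propositional_extensionality; split; eauto.
Qed.

Lemma qclass_qrep c : qclass A th (qrep c) = c.
Proof.
  apply qcar_eq; simpl. unfold qrep.
  destruct (constructive_indefinite_description _ _) as [a Ha]; simpl; auto.
Qed.

Lemma eval_quot V (w : V -> A) t :
  eval (quotient A th) (fun x => qclass A th (w x)) t = qclass A th (eval A w t).
Proof.
  induction t as [x|f ts IH]; simpl; auto.
  change (qclass A th (op A f (fun i => qrep (eval (quotient A th) (fun x => qclass A th (w x)) (ts i))))
          = qclass A th (op A f (fun i => eval A w (ts i)))).
  apply qclass_eq. destruct Hc as (_ & _ & _ & Ho). apply Ho. intro i.
  rewrite IH. apply qclass_eq. apply qclass_qrep.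
Qed.

Lemma eval_quot' V (v : V -> quotient A th) t :
  eval (quotient A th) v t = qclass A th (eval A (fun x => qrep (v x)) t).
Proof.
  rewrite <- eval_quot. apply eval_ext. intro; symmetry; apply qclass_qrep.
Qed.
End Quot.

Definition Fq (A : algebra S) (F : A -> Prop) : quotient A (Leibniz A F) -> Prop :=
  fun c => exists a, F a /\ c = qclass A (Leibniz A F) a.

Lemma Fq_class (A : algebra S) F a : Fq A F (qclass A (Leibniz A F) a) <-> F a.
Proof.
  split.
  - intros (a' & Fa' & E). apply (proj1 (qclass_eq A _ (Leibniz_congruence A F) a a')) in E.
    destruct (Leibniz_congruence A F) as (_ & Hs & _).
    eapply Leibniz_compatible; eauto.
  - intro; exists a; auto.
Qed.

Lemma reduction_model (L : crel S) (A : algebra S) (F : A -> Prop) :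
  is_model L A F -> reduced_model L (quotient A (Leibniz A F)) (Fq A F).
Proof.
  intro HA. pose proof (Leibniz_congruence A F) as Hc. split.
  - intros Gamma phi HL v Hg. simpl in *.
    rewrite eval_quot' by auto. apply Fq_class.
    apply (HA Gamma phi HL). simpl. intros g Hgg. specialize (Hg g Hgg).
    rewrite eval_quot' in Hg by auto. apply (proj1 (Fq_class A F _)) in Hg; exact Hg.
  - intros c d H. rewrite <- (qclass_qrep _ _ c), <- (qclass_qrep _ _ d).
    apply (qclass_eq A _ Hc). apply Leibniz_theta. apply Leibniz_theta in H.
    intros phi v k. rewrite <- (Fq_class A F (eval A (upd v k (qrep c)) phi)).
    rewrite <- (Fq_class A F (eval A (upd v k (qrep d)) phi)). rewrite <- !eval_quot by exact Hc.
    specialize (H phi (fun n => qclass A _ (v n)) k).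
    replace (fun x => qclass A (Leibniz A F) (upd v k (qrep c) x))
      with (upd (fun n => qclass A (Leibniz A F) (v n)) k c).
    replace (fun x => qclass A (Leibniz A F) (upd v k (qrep d) x))
      with (upd (fun n => qclass A (Leibniz A F) (v n)) k d).
    exact H.
    all: apply functional_extensionality; intro x; unfold upd; destruct (Nat.eqb x k); auto;
      symmetry; apply qclass_qrep.
Qed.


Lemma ctx_eval (A : algebra S) phi k (eps : term S unit) (u : nat -> A) :
  eval A u (subst (fun m => if Nat.eqb m k then subst (fun _ => Var S 0) eps else Var S (Datatypes.S m)) phi)
  = eval A (upd (fun m => u (Datatypes.S m)) k (eval A (fun _ => u 0) eps)) phi.
Proof.
  rewrite eval_subst. apply eval_ext. intro m. unfold upd. destruct (Nat.eqb m k); auto.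
  rewrite eval_subst. reflexivity.
Qed.

Lemma model_of_M (M : list (matrix S)) m : In m M -> is_model (logic_of M) (malg m) (mfil m).
Proof. intros Hm Gamma phi HL. specialize (HL m Hm). destruct m; exact HL. Qed.

Lemma rule_dir (M : list (matrix S)) (eps del : term S unit)
  (Hyp : forall m, In m M -> forall a : malg m, mfil m a ->
     eval (quotient (malg m) (Leibniz (malg m) (mfil m))) (fun _ => qclass _ (Leibniz (malg m) (mfil m)) a) eps
     = eval (quotient (malg m) (Leibniz (malg m) (mfil m))) (fun _ => qclass _ (Leibniz (malg m) (mfil m)) a) del)
  (B : algebra S) (G : B -> Prop) (HB : is_model (logic_of M) B G) (b : B) (Gb : G b) phi v k :
  G (eval B (upd v k (eval B (fun _ => b) eps)) phi) -> G (eval B (upd v k (eval B (fun _ => b) del)) phi).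
Proof.
  set (ctx := fun e : term S unit =>
        subst (fun m => if Nat.eqb m k then subst (fun _ => Var S 0) e else Var S (Datatypes.S m)) phi).
  assert (HL : logic_of M (fun g => g = Var S 0 \/ g = ctx eps) (ctx del)).
  { intros m Hm w Hg. simpl in *.
    assert (F0 : mfil m (w 0)) by exact (Hg (Var S 0) (or_introl eq_refl)).
    pose proof (Hg (ctx eps) (or_intror eq_refl)) as F1.
    unfold ctx in *. rewrite ctx_eval in F1 |- *.
    pose proof (Hyp m Hm (w 0) F0) as E.
    pose proof (Leibniz_congruence (malg m) (mfil m)) as Hc.
    rewrite (eval_quot _ _ Hc unit (fun _ => w 0) eps), (eval_quot _ _ Hc unit (fun _ => w 0) del) in E.
    apply (proj1 (qclass_eq _ _ Hc _ _)) in E. apply Leibniz_theta in E.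
    apply (E phi (fun m => w (Datatypes.S m)) k). exact F1. }
  intro H1. specialize (HB _ _ HL (fun n => match n with 0 => b | Datatypes.S m => v m end)).
  simpl in HB. unfold ctx in HB. rewrite !ctx_eval in HB.
  replace (fun m => v m) with v in HB by reflexivity.
  apply HB. intros g [-> | ->]; simpl; auto. rewrite ctx_eval. exact H1.
Qed.

Lemma lemmaA (M : list (matrix S)) (B : algebra S) (G : B -> Prop)
  (HB : reduced_model (logic_of M) B G) b : G b -> sat B (tau_M M) b.
Proof.
  intros Gb e He. destruct HB as [HB Hred]. apply Hred. apply Leibniz_theta.
  intros phi v k. split.
  - apply (rule_dir M (fst e) (snd e)); auto.
  - apply (rule_dir M (snd e) (fst e)); auto.
    intros m Hm a Ha. symmetry. exact (He m Hm a Ha).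
Qed.

Section Sub.
Context (B : algebra S) (b : B).
Definition subcar := {c : B | exists t : term S unit, eval B (fun _ => b) t = c}.
Lemma subcar_eq (x y : subcar) : proj1_sig x = proj1_sig y -> x = y.
Proof. destruct x, y; simpl; intro; subst; f_equal; apply proof_irrelevance. Qed.
Lemma subop_ok f (args : Fin.t (ar S f) -> subcar) :
  exists t : term S unit, eval B (fun _ => b) t = op B f (fun i => proj1_sig (args i)).
Proof.
  exists (App f (fun i => proj1_sig (constructive_indefinite_description _ (proj2_sig (args i))))).
  simpl. f_equal. apply functional_extensionality; intro i.
  destruct (constructive_indefinite_description _ _); auto.
Qed.
Definition subop f (args : Fin.t (ar S f) -> subcar) : subcar :=
  exist _ (op B f (fun i => proj1_sig (args i))) (subop_ok f args).
Definition subalg : algebra S := {| car := subcar ; op := subop |}.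
Lemma eval_sub V (v : V -> subalg) t :
  proj1_sig (eval subalg v t) = eval B (fun x => proj1_sig (v x)) t.
Proof.
  induction t as [x|f ts IH]; simpl; auto. f_equal.
  apply functional_extensionality; intro i; apply IH.
Qed.
Definition gen : subalg := exist _ b (ex_intro _ (Var S tt) eq_refl).
Lemma sub_onegen : one_generated subalg.
Proof.
  exists gen. intros [x [t Ht]]. exists t. apply subcar_eq. rewrite eval_sub. exact Ht.
Qed.
Lemma sub_model L G : is_model L B G -> is_model L subalg (fun c => G (proj1_sig c)).
Proof.
  intros HB Gamma phi HL v Hg. simpl in *. rewrite eval_sub.
  apply (HB Gamma phi HL). intros g Hgg. simpl. rewrite <- eval_sub. apply Hg; auto.
Qed.
End Sub.

Lemma quot_onegen (A : algebra S) th : congruence A th -> one_generated A -> one_generated (quotient A th).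
Proof.
  intros Hc [b Hb]. exists (qclass A th b). intro c.
  destruct (Hb (qrep c)) as [t Ht]. exists t.
  rewrite (eval_quot A th Hc unit (fun _ => b)). rewrite Ht. apply qclass_qrep.
Qed.

Lemma TE_to (M : list (matrix S)) tau :
  truth_equational_by (logic_of M) tau -> truth_equational_by (logic_of M) (tau_M M).
Proof.
  intros Htau B G Hred b. split.
  - apply lemmaA; auto.
  - intro Hs. apply (Htau B G Hred b). intros e He. apply Hs.
    intros m Hm a Ha. cbv zeta.
    pose proof (reduction_model _ _ _ (model_of_M M m Hm)) as R.
    exact (proj1 (Htau _ _ R (qclass _ _ a)) (proj2 (Fq_class _ _ a) Ha) e He).
Qed.

Lemma cond_tauM (M : list (matrix S)) :
  truth_equational_by (logic_of M) (tau_M M) -> lemma_condition M (tau_M M).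
Proof.
  intro H. split.
  - intros B G HR _ b. apply H; auto.
  - intros m Hm a Ha e He. exact (He m Hm a Ha).
Qed.

Lemma cond_to (M : list (matrix S)) tau :
  lemma_condition M tau -> truth_equational_by (logic_of M) (tau_M M).
Proof.
  intros [C1 C2] B G Hred b. split.
  - apply lemmaA; auto.
  - intro Hs.
    set (Sb := subalg B b).
    set (G' := fun c : Sb => G (proj1_sig c)).
    pose proof (reduction_model _ Sb G' (sub_model B b _ G (proj1 Hred))) as R.
    pose proof (Leibniz_congruence Sb G') as Hc.
    pose proof (C1 _ _ R (quot_onegen _ _ Hc (sub_onegen B b)) (qclass _ _ (gen B b))) as H.
    apply (proj1 (Fq_class Sb G' (gen B b))). apply H.
    intros e He.
    assert (HeM : tau_M M e).
    { intros m Hm a Ha. exact (C2 m Hm a Ha e He). }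
    rewrite !(eval_quot Sb _ Hc unit (fun _ => gen B b)). f_equal.
    apply subcar_eq. rewrite !eval_sub. exact (Hs e HeM).
Qed.

End Proof.

Theorem lemma2p2 (S : signature) (M : list (matrix S))
  (HM : forall m, In m M -> finite_algebra (malg m)) :
  (truth_equational (logic_of M) <-> exists tau, lemma_condition M tau) /\
  (truth_equational (logic_of M) ->
     truth_equational_by (logic_of M) (tau_M M) /\ lemma_condition M (tau_M M)).
Proof.
  split; [split|].
  - intros [tau H]. exists (tau_M M). apply cond_tauM, (TE_to _ M tau H).
  - intros [tau H]. exists (tau_M M). apply (cond_to _ M tau H).
  - intros [tau H]. pose proof (TE_to _ M tau H). split; auto. apply cond_tauM; auto.
Qed.
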